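(* Let $Y=T\times_H\mathfrak h^\circ\times\mathbb C^{h+1}$ be a tall local model with moment map $\Phi_Y$ and let $N$ be the degree of its defining polynomial $P(z)=\prod_jz_j^{\xi_j}$. Then for all $[t,\alpha,z]\in\Phi_Y^{-1}(0)$, $$|z|^2=N\Big(\prod_j\xi_j^{\xi_j}\Big)^{-1/N}|P(z)|^{2/N},$$ with the convention $0^0=1$.
   Context: $T$ is a torus with Lie algebra $\mathfrak t$, $H\subseteq T$ a closed subgroup of dimension $h$ with Lie algebra $\mathfrak h$, $\rho\colon H\to(S^1)^{h+1}$ an injective homomorphism, $\eta_i\in\mathfrak h^*$ the differential of the $i$-th component of $\rho$. A fixed inner product on $\mathfrak t$ identifies $\mathfrak t^*\cong\mathfrak h^\circ\oplus\mathfrak h^*$. The local model $Y=T\times_H\mathfrak h^\circ\times\mathbb C^{h+1}$ ($H$ acting on $T$ by multiplication, trivially on $\mathfrak h^\circ$, on $\mathbb C^{h+1}$ by $h\cdot z=\rho(h^{-1})z$) has $T$-action $s\cdot[t,\alpha,z]=[st,\alpha,z]$ and moment map $\Phi_Y([t,\alpha,z])=\alpha+\frac12\sum_i\eta_i|z_i|^2$. $Y$ is tall if $\Phi_Y^{-1}(0)$ contains more than one $T$-orbit; then there is a unique $\xi\in\mathbb Z_{\ge0}^{h+1}$ with $\lambda\mapsto\prod_j\lambda_j^{\xi_j}$ giving a short exact sequence $1\to H\xrightarrow{\rho}(S^1)^{h+1}\to S^1\to1$; the defining polynomial is $P(z)=\prod_jz_j^{\xi_j}$ and its degree is $N=\sum_j\xi_j$.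 *)

(* Defs.v *)
From HB Require Import structures.
From mathcomp Require Import all_boot all_order all_algebra.
From mathcomp Require Import all_classical all_reals all_analysis.
From mathcomp Require Import complex.
Set Implicit Arguments. Unset Strict Implicit. Unset Printing Implicit Defensive.
Import Order.TTheory GRing.Theory Num.Theory.
Import numFieldNormedType.Exports.
Local Open Scope ring_scope.
Local Open Scope classical_set_scope.

(* Conventions:
   - The torus T of dimension n is R^n / Z^n; an element of T is represented
     by a row vector t : 'rV[R]_n (two vectors represent the same element iff
     their difference is integral).  Its Lie algebra is t = R^n and exp is the
     quotient map.  S^1 = R/Z likewise, and theta in R/Z acts on C by
     multiplication with e^{2 pi i theta}.
   - A subset of T is represented by its (Z^n-invariant) preimage in R^n. *)

Section Defs.
Variable R : realType.

(* v represents 0 in the torus R^m/Z^m *)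
Definition intvec m (v : 'rV[R]_m) : Prop := forall j, v 0 j \is a Num.int.

(* canonical pairing t^* x t -> R (t^* = R^n via the dual basis) *)
Definition pairing n (a X : 'rV[R]_n) : R := \sum_j a 0 j * X 0 j.

Definition circ (th : R) : R[i] := Complex (cos (2 * pi * th)) (sin (2 * pi * th)).

Definition cmod (w : R[i]) : R := Num.sqrt (@complex.Re R w ^+ 2 + @complex.Im R w ^+ 2).

Definition closed_subgroup n (H : set 'rV[R]_n) : Prop :=
  [/\ forall v, intvec v -> H v,
      forall x y, H x -> H y -> H (x - y) &
      closed H].

Definition lie_algebra n (H : set 'rV[R]_n) (hsp : {vspace 'rV[R]_n}) : Prop :=
  forall X, (X \in hsp) <-> (forall s : R, H (s *: X)).

(* rho (on representatives) defines a homomorphism H -> (S^1)^m = R^m/Z^m *)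
Definition torus_hom n m (H : set 'rV[R]_n) (rho : 'rV[R]_n -> 'rV[R]_m) : Prop :=
  (forall v, intvec v -> intvec (rho v)) /\
  (forall x y, H x -> H y -> intvec (rho (x - y) - (rho x - rho y))).

Definition torus_hom_injective n m (H : set 'rV[R]_n) (rho : 'rV[R]_n -> 'rV[R]_m) : Prop :=
  forall x, H x -> intvec (rho x) -> intvec x.

(* eta_i in h^* (i < m) are the components of the differential of rho:
   each eta_i is linear on h and rho (exp X) = exp (eta_1 X, ..., eta_m X). *)
Definition is_differential n m (hsp : {vspace 'rV[R]_n})
    (rho : 'rV[R]_n -> 'rV[R]_m) (eta : 'I_m -> 'rV[R]_n -> R) : Prop :=
  (forall i (a : R) X Y, X \in hsp -> Y \in hsp ->
      eta i (a *: X + Y) = a * eta i X + eta i Y) /\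
  (forall X, X \in hsp -> intvec (rho X - \row_i eta i X)).

(* 1 -> H --rho--> (S^1)^m --(lambda |-> prod lambda_j^xi_j)--> S^1 -> 1 is
   exact (injectivity of rho is stated separately); on R/Z the character
   lambda |-> prod_j lambda_j^xi_j is theta |-> sum_j xi_j theta_j. *)
Definition exact_at_middle_and_right n m (H : set 'rV[R]_n)
    (rho : 'rV[R]_n -> 'rV[R]_m) (xi : 'I_m -> nat) : Prop :=
  (forall c : R, exists th : 'rV[R]_m,
      (\sum_j (xi j)%:R * th 0 j - c) \is a Num.int) /\
  (forall th : 'rV[R]_m,
      ((\sum_j (xi j)%:R * th 0 j) \is a Num.int) <->
      exists x, H x /\ intvec (rho x - th)).

Definition in_annihilator n (hsp : {vspace 'rV[R]_n}) (alpha : 'rV[R]_n) : Prop :=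
  forall X, X \in hsp -> pairing alpha X = 0.

(* Moment map of Y = T x_H h° x C^m at [t, alpha, z], as an element of
   t^* = h° (+) h^*: first component in h°, second a functional on h. *)
Definition Phi_Y n m (eta : 'I_m -> 'rV[R]_n -> R)
    (t alpha : 'rV[R]_n) (z : 'I_m -> R[i]) : 'rV[R]_n * ('rV[R]_n -> R) :=
  (alpha, fun X => 2^-1 * \sum_i eta i X * cmod (z i) ^+ 2).

Definition Phi_Y_zero n m (hsp : {vspace 'rV[R]_n}) (eta : 'I_m -> 'rV[R]_n -> R)
    (t alpha : 'rV[R]_n) (z : 'I_m -> R[i]) : Prop :=
  (Phi_Y eta t alpha z).1 = 0 /\
  forall X, X \in hsp -> (Phi_Y eta t alpha z).2 X = 0.

(* [t, alpha, z] and [t', alpha', z'] lie in the same T-orbit of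
   Y = (T x h° x C^m)/H, where x in H acts by
   x.(t, alpha, z) = (x t, alpha, rho(x^{-1}) z) and s in T acts by
   s.[t, alpha, z] = [s t, alpha, z]. *)
Definition same_T_orbit n m (H : set 'rV[R]_n) (rho : 'rV[R]_n -> 'rV[R]_m)
    (t alpha : 'rV[R]_n) (z : 'I_m -> R[i])
    (t' alpha' : 'rV[R]_n) (z' : 'I_m -> R[i]) : Prop :=
  exists (s x : 'rV[R]_n), [/\ H x, intvec (t' - (x + (s + t))), alpha' = alpha &
     forall j, z' j = circ (- rho x 0 j) * z j].

Definition tall n m (H : set 'rV[R]_n) (hsp : {vspace 'rV[R]_n})
    (rho : 'rV[R]_n -> 'rV[R]_m) (eta : 'I_m -> 'rV[R]_n -> R) : Prop :=
  exists (t alpha t' alpha' : 'rV[R]_n) (z z' : 'I_m -> R[i]),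
    [/\ in_annihilator hsp alpha, in_annihilator hsp alpha',
        Phi_Y_zero hsp eta t alpha z, Phi_Y_zero hsp eta t' alpha' z' &
        ~ same_T_orbit H rho t alpha z t' alpha' z'].

Definition def_poly m (xi : 'I_m -> nat) (z : 'I_m -> R[i]) : R[i] :=
  \prod_j z j ^+ xi j.

Definition def_degree m (xi : 'I_m -> nat) : nat := (\sum_j xi j)%N.

End Defs.

(* Main.v *)
Require Import Defs.
From HB Require Import structures.
From mathcomp Require Import all_boot all_order all_algebra.
From mathcomp Require Import all_classical all_reals all_analysis.
From mathcomp Require Import complex.
From mathcomp Require Import zify ring lra.
Import Order.TTheory GRing.Theory Num.Theory.
Import numFieldNormedType.Exports.
Local Open Scope ring_scope.
Local Open Scope classical_set_scope.

Lemma half_notint (R : realType) : ~ ((2^-1 : R) \is a Num.int).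
Proof.
move/intrP=> [m hm].
have h1 : (0 : R) < m%:~R by rewrite -hm.
have h2 : m%:~R < (1 : R) by rewrite -hm invf_lt1 // ltr1n.
rewrite ltr0z in h1; rewrite ltrz1 in h2; lia.
Qed.

Lemma int_scale0 (R : realType) (L : R) : (forall s : R, s * L \is a Num.int) -> L = 0.
Proof.
move=> hs; apply/eqP; apply/negPn/negP => hL.
apply: (@half_notint R); have := hs (2^-1 / L).
by rewrite -mulrA mulVf // mulr1.
Qed.

Lemma cmod_normc (R : realType) (w : R[i]) : cmod w = Normc.normc w.
Proof. by case: w. Qed.

Lemma cmodM (R : realType) (a b : R[i]) : cmod (a * b) = cmod a * cmod b.
Proof. by rewrite !cmod_normc Normc.normcM. Qed.

Lemma cmod1 (R : realType) : cmod (1 : R[i]) = 1.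
Proof. by rewrite cmod_normc Normc.normc1. Qed.

Lemma cmodX (R : realType) (a : R[i]) k : cmod (a ^+ k) = cmod a ^+ k.
Proof. by elim: k => [|k IH]; rewrite ?expr0 ?cmod1 // !exprS cmodM IH. Qed.

Lemma cmod_prod (R : realType) m (F : 'I_m -> R[i]) :
  cmod (\prod_j F j) = \prod_j cmod (F j).
Proof.
apply: (big_morph (@cmod R)); [exact: cmodM | exact: cmod1].
Qed.

Lemma cmod_ge0 (R : realType) (w : R[i]) : 0 <= cmod w.
Proof. exact: sqrtr_ge0. Qed.
Theorem lemma2p7 (R : realType) (n h : nat)
    (H : set 'rV[R]_n) (hsp : {vspace 'rV[R]_n})
    (rho : 'rV[R]_n -> 'rV[R]_h.+1) (eta : 'I_h.+1 -> 'rV[R]_n -> R)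
    (xi : 'I_h.+1 -> nat) :
  closed_subgroup H ->
  lie_algebra H hsp ->
  \dim hsp = h ->
  torus_hom H rho ->
  torus_hom_injective H rho ->
  is_differential hsp rho eta ->
  tall H hsp rho eta ->
  exact_at_middle_and_right H rho xi ->
  forall (t alpha : 'rV[R]_n) (z : 'I_h.+1 -> R[i]),
    in_annihilator hsp alpha ->
    Phi_Y_zero hsp eta t alpha z ->
    \sum_j cmod (z j) ^+ 2 =
      (def_degree xi)%:R
      * ((\prod_j ((xi j) ^ (xi j))%N%:R) `^ (- ((def_degree xi)%:R)^-1))
      * (cmod (def_poly xi z) `^ (2 / (def_degree xi)%:R)).
Proof.
move=> _ Hlie Hdim _ Hinj [Hlin Hdiff] _ [Hex1 Hex2] t alpha z _ [_ Hphi].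
have eta0 : forall i, eta i 0 = 0.
  move=> i; have := Hlin i 1 0 0 (mem0v _) (mem0v _).
  rewrite scale1r addr0 mul1r => /(congr1 (fun x => x - eta i 0)).
  by rewrite subrr addrK.
have etaZ : forall i s X, X \in hsp -> eta i (s *: X) = s * eta i X.
  by move=> i s X hX; have := Hlin i s X 0 hX (mem0v _); rewrite !addr0 eta0 addr0.
have Hxi : forall X, X \in hsp -> \sum_j (xi j)%:R * eta j X = 0.
  move=> X hX; apply: int_scale0 => s.
  have HsX : H (s *: X) by move/Hlie: hX.
  have hint : \sum_j (xi j)%:R * rho (s *: X) 0 j \is a Num.int.
    by apply/Hex2; exists (s *: X); split => // j; rewrite subrr mxE int_num0.
  have hd := Hdiff (s *: X) (memvZ _ hX).
  rewrite mulr_sumr.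
  have -> : \sum_j s * ((xi j)%:R * eta j X) = \sum_j (xi j)%:R * rho (s *: X) 0 j
      - \sum_j (xi j)%:R * (rho (s *: X) 0 j - eta j (s *: X)).
    by rewrite -sumrB; apply: eq_bigr => j _; rewrite etaZ //; ring.
  rewrite rpredB // rpred_sum // => j _; rewrite rpredM ?natr_int //.
  by have := hd j; rewrite !mxE.
have Hinjeta : forall X, X \in hsp -> (forall i, eta i X = 0) -> X = 0.
  move=> X hX h0.
  have hi : forall s : R, intvec (s *: X).
    move=> s; apply: Hinj; first by move/Hlie: hX.
    move=> j; have := Hdiff (s *: X) (memvZ _ hX) j.
    by rewrite !mxE etaZ // h0 mulr0 subr0.
  apply/rowP => j; rewrite mxE; apply: int_scale0 => s.
  by have := hi s j; rewrite mxE mulrC.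
pose d := \dim hsp. pose B := vbasis hsp.
have Bmem : forall k : 'I_d, B`_k \in hsp.
  by move=> k; apply: vbasis_mem; apply: mem_nth; rewrite size_tuple.
have etaSum : forall i (a : 'I_d -> R), (\sum_k a k *: B`_k \in hsp) /\
    eta i (\sum_k a k *: B`_k) = \sum_k a k * eta i B`_k.
  move=> i a.
  pose K := fun (y1 : R) (y2 : 'rV[R]_n) => y2 \in hsp /\ eta i y2 = y1.
  suff : K (\sum_k a k * eta i B`_k) (\sum_k a k *: B`_k) by case.
  apply: big_rec2; first by split; [exact: mem0v | exact: eta0].
  move=> k y1 y2 _ [hy2 ey2]; split; first by rewrite rpredD ?rpredZ.
  by rewrite Hlin // ey2.
pose A : 'M[R]_(h.+1, d) := \matrix_(i, k) eta i B`_k.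
have fA : row_free A^T.
  apply: inj_row_free => v hv.
  pose X := \sum_k v 0 k *: B`_k.
  have hX : X \in hsp by have [] := etaSum ord0 (fun k => v 0 k).
  have X0 : X = 0.
    apply: (Hinjeta X hX) => i; have [_ ->] := etaSum i (fun k => v 0 k).
    have := congr1 (fun M : 'M[R]_(1, h.+1) => M 0 i) hv; rewrite !mxE => h0.
    by rewrite -[X in _ = X]h0; apply: eq_bigr => k _; rewrite !mxE.
  apply/rowP => k; rewrite mxE.
  by move/freeP: (basis_free (vbasisP hsp)) => /(_ (fun k => v 0 k) X0 k).
have rA : \rank A = d by move: fA; rewrite /row_free mxrank_tr => /eqP.
pose K := kermx A.
have rK : \rank K = 1%N by rewrite mxrank_ker rA /d Hdim subSnn.
pose c := \row_i cmod (z i) ^+ 2 : 'rV[R]_h.+1.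
pose x := \row_i (xi i)%:R : 'rV[R]_h.+1.
have cK : (c <= K)%MS.
  apply/sub_kermxP; apply/rowP => k; rewrite !mxE.
  have := Hphi _ (Bmem k); rewrite /= => /eqP; rewrite mulf_eq0 invr_eq0 pnatr_eq0 /=.
  move=> /eqP h0; rewrite -[X in _ = X]h0; apply: eq_bigr => i _; rewrite !mxE mulrC //.
have xK : (x <= K)%MS.
  apply/sub_kermxP; apply/rowP => k; rewrite !mxE.
  rewrite -[X in _ = X](Hxi _ (Bmem k)); apply: eq_bigr => i _; rewrite !mxE //.
have [j0 hj0] : exists j0, (0 < xi j0)%N.
  case: (pselect (exists j0, (0 < xi j0)%N)) => // hn; exfalso.
  have [th hth] := Hex1 2^-1.
  have hs : \sum_j (xi j)%:R * th 0 j = 0.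
    apply: big1 => j _.
    have -> : xi j = 0%N.
      by apply/eqP; rewrite -leqn0 leqNgt; apply/negP => hj; apply: hn; exists j.
    by rewrite mul0r.
  rewrite hs sub0r rpredN in hth; exact: (@half_notint R hth).
have x0 : x != 0.
  apply/eqP => /rowP /(_ j0); rewrite !mxE => /eqP; rewrite pnatr_eq0 => /eqP h0.
  by rewrite h0 in hj0.
have rx : \rank x = 1%N by rewrite rank_rV x0.
have Kx : (K <= x)%MS by rewrite -(mxrank_leqif_sup xK).2 rx rK.
have [lam hlam] : exists lam, c = lam *: x by apply/sub_rVP; exact: submx_trans cK Kx.
have hc : forall j, cmod (z j) ^+ 2 = lam * (xi j)%:R.
  by move=> j; have := congr1 (fun M : 'M[R]_(1, h.+1) => M 0 j) hlam; rewrite !mxE.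
have lam0 : 0 <= lam.
  have := sqr_ge0 (cmod (z j0)); rewrite hc pmulr_lge0 // ltr0n //.
have N0 : (0 < def_degree xi)%N.
  by rewrite /def_degree (bigD1 j0) //=; lia.
set Nn := def_degree xi.
set Q := \prod_j ((xi j) ^ (xi j))%N%:R.
have Q0 : 0 < Q.
  by apply: prodr_gt0 => j _; rewrite ltr0n expn_gt0; case: (xi j).
have hP : cmod (def_poly xi z) ^+ 2 = lam ^+ Nn * Q.
  rewrite /def_poly cmod_prod -prodrXl.
  under eq_bigr do rewrite cmodX -exprM mulnC exprM hc exprMn.
  rewrite big_split /= prodrXr /Q.
  by congr (_ * _); apply: eq_bigr => j _; rewrite natrX.
have Nr0 : (Nn%:R : R) != 0 by rewrite pnatr_eq0 -lt0n.
have -> : cmod (def_poly xi z) `^ (2 / Nn%:R) = lam * Q `^ (Nn%:R^-1).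
  rewrite powRrM powR_mulrn ?cmod_ge0 // hP powRM ?(exprn_ge0 _ lam0) ?(ltW Q0) //.
  by rewrite -powR_mulrn // -powRrM mulfV // powRr1.

under eq_bigr do rewrite hc.
rewrite -mulr_sumr -natr_sum -/Nn powRN.
have : 0 < Q `^ (Nn%:R^-1) by apply: powR_gt0.
move=> hq; field; rewrite gt_eqF //.
Qed.
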